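(* Assume $|\mathcal S|\ge2$ and let $\epsilon,\delta,\tau>0$. Consider the following procedure (Tau-Push, DPPR part): set $r_{max}=\frac{\epsilon\delta}{m\tau}$; for each $\mathcal V_i\in\mathcal S$ run GFP$(G,\mathcal S,\mathcal V_i,r_{max})$ and record its outputs $\hat\pi_d(\mathcal V_i,\mathcal V_j)$ for all $\mathcal V_j\in\mathcal S$; then for each $\mathcal V_j\in\mathcal S$ with $\tau_j>\tau$, run GBP$(G,\mathcal S,\mathcal V_j,r^b_{max}(\mathcal V_j))$ with $r^b_{max}(\mathcal V_j)=\epsilon\delta\big/\max_{\mathcal V_i\in\mathcal S\setminus\{\mathcal V_j\}}\frac{1}{|F(\mathcal V_i)|}\sum_{v_s\in F(\mathcal V_i)}d(v_s)$, and replace the recorded $\hat\pi_d(\mathcal V_i,\mathcal V_j)$ by the GBP output for every $\mathcal V_i\in\mathcal S$. Then the procedure terminates and, for all $\mathcal V_i,\mathcal V_j\in\mathcal S$ with $\mathcal V_i\ne\mathcal V_j$, the final value $\hat\pi_d(\mathcal V_i,\mathcal V_j)$ is an $(\epsilon,\delta)$-approximation of $\pi_d(\mathcal V_i,\mathcal V_j)$.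
   Context: $G=(V,E)$ is a directed graph with $n$ nodes and $m$ edges, no self-loops, and every node of out-degree $d(v)\ge1$; $\alpha\in(0,1)$. PPR $\pi(u,v)$: probability that a random walk from $u$ which at each step stops with probability $\alpha$ and otherwise moves to a uniformly random out-neighbor stops at $v$; $\pi_d(u,v)=d(u)\pi(u,v)$. A collection $\mathcal S=\{\mathcal V_1,\dots,\mathcal V_k\}$ of supernodes is given, each $\mathcal V_i$ having a nonempty leaf set $F(\mathcal V_i)\subseteq V$, the leaf sets being pairwise disjoint. For supernodes, $\pi_d(\mathcal V_i,\mathcal V_j)=\frac{1}{|F(\mathcal V_i)||F(\mathcal V_j)|}\sum_{v_s\in F(\mathcal V_i),v_t\in F(\mathcal V_j)}\pi_d(v_s,v_t)$. The degree-normalized PageRank of $\mathcal V_j$ is $\tau_j=\frac{1}{m|F(\mathcal V_j)|}\sum_{v_t\in F(\mathcal V_j)}\sum_{v_k\in V}\pi_d(v_k,v_t)$. A value $\hat x$ is an $(\epsilon,\delta)$-approximation of $x\ge0$ if $|\hat x-x|\le\epsilon\delta$ when $x<\delta$, and $|\hat x-x|\le\epsilon x$ when $x\ge\delta$. Procedure GFP$(G,\mathcal S,\mathcal V_i,r_{max})$: set $\hat\pi_d(\mathcal V_i,\mathcal V_j)=0$ for all $\mathcal V_j\in\mathcal S$; set $r(\mathcal V_i,v)=d(v)/|F(\mathcal V_i)|$ for $v\in F(\mathcal V_i)$ and $0$ otherwise. While some $v_k$ has $r(\mathcal V_i,v_k)>d(v_k)\,r_{max}$, pick any such $v_k$ and: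 if $v_k\in F(\mathcal V_j)$ for some $\mathcal V_j\in\mathcal S$, add $\alpha\,r(\mathcal V_i,v_k)/|F(\mathcal V_j)|$ to $\hat\pi_d(\mathcal V_i,\mathcal V_j)$; for each out-neighbor $v_j$ of $v_k$ add $(1-\alpha)\,r(\mathcal V_i,v_k)/d(v_k)$ to $r(\mathcal V_i,v_j)$; then set $r(\mathcal V_i,v_k)=0$. Output $\hat\pi_d(\mathcal V_i,\cdot)$. Procedure GBP$(G,\mathcal S,\mathcal V_j,r^b_{max})$: set $\hat\pi_d(\mathcal V_i,\mathcal V_j)=0$ for all $\mathcal V_i\in\mathcal S$; set $r(v,\mathcal V_j)=1/|F(\mathcal V_j)|$ for $v\in F(\mathcal V_j)$ and $0$ otherwise. While some $v_k$ has $r(v_k,\mathcal V_j)>r^b_{max}$, pick any such $v_k$ and: if $v_k\in F(\mathcal V_i)$ for some $\mathcal V_i\in\mathcal S$, add $\alpha\,d(v_k)\,r(v_k,\mathcal V_j)/|F(\mathcal V_i)|$ to $\hat\pi_d(\mathcal V_i,\mathcal V_j)$; for each in-neighbor $v_i$ of $v_k$ add $(1-\alpha)\,r(v_k,\mathcal V_j)/d(v_i)$ to $r(v_i,\mathcal V_j)$; then set $r(v_k,\mathcal V_j)=0$. Output $\hat\pi_d(\cdot,\mathcal V_j)$. *)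

(* Defs.v *)
From HB Require Import structures.
From mathcomp Require Import all_boot all_order all_algebra.
From mathcomp Require Import all_classical all_reals all_analysis.
Set Implicit Arguments. Unset Strict Implicit. Unset Printing Implicit Defensive.
Import Order.TTheory GRing.Theory Num.Theory.
Local Open Scope ring_scope.

Inductive reach (T : Type) (step : T -> T -> Prop) (x : T) : T -> Prop :=
| reach_refl : reach step x x
| reach_step y z : reach step x y -> step y z -> reach step x z.

Section Defs.
Variables (R : realType) (n : nat) (e : rel 'I_n) (k : nat)
  (F : 'I_k -> {set 'I_n}).

Definition outdeg (v : 'I_n) : nat := #|[set w | e v w]|.
Definition nedges : nat := #|[set p : 'I_n * 'I_n | e p.1 p.2]|.

Definition trans_mx : 'M[R]_n :=
  \matrix_(u, w) (if e u w then ((outdeg u)%:R)^-1 else 0).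
Definition walk_mx (t : nat) : 'M[R]_n := iter t (fun M => M *m trans_mx) 1%:M.

(* PPR: probability that the alpha-stopping walk from u stops at v
   (it stops after exactly t steps w.p. alpha (1-alpha)^t) *)
Definition ppr (alpha : R) (u v : 'I_n) : R :=
  limn (fun N : nat => \sum_(0 <= t < N) (alpha * (1 - alpha) ^+ t * walk_mx t u v)).
Definition ppr_d (alpha : R) (u v : 'I_n) : R := (outdeg u)%:R * ppr alpha u v.

Definition ppr_d_sn (alpha : R) (i j : 'I_k) : R :=
  ((#|F i| * #|F j|)%:R)^-1 * \sum_(s in F i) \sum_(t in F j) ppr_d alpha s t.
Definition tau_pr (alpha : R) (j : 'I_k) : R :=
  ((nedges * #|F j|)%:R)^-1 * \sum_(t in F j) \sum_(u : 'I_n) ppr_d alpha u t.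

Definition ed_approx (eps delta xhat x : R) : Prop :=
  (x < delta -> `|xhat - x| <= eps * delta) /\
  (delta <= x -> `|xhat - x| <= eps * x).

(* states of the push procedures: (estimates indexed by supernodes, residues) *)
Definition pstate := (('I_k -> R) * ('I_n -> R))%type.

Definition gfp_init (i : 'I_k) : pstate :=
  (fun _ => 0, fun v => if v \in F i then (outdeg v)%:R / (#|F i|)%:R else 0).
Definition gfp_push (alpha : R) (st : pstate) (vk : 'I_n) : pstate :=
  let r := st.2 vk in
  (fun j => st.1 j + (if vk \in F j then alpha * r / (#|F j|)%:R else 0),
   fun w => if w == vk then 0
            else st.2 w + (if e vk w then (1 - alpha) * r / (outdeg vk)%:R else 0)).
Definition gfp_step (alpha rmax : R) (st st' : pstate) : Prop :=
  exists vk, (outdeg vk)%:R * rmax < st.2 vk /\ st' = gfp_push alpha st vk.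
Definition gfp_terminal (rmax : R) (st : pstate) : Prop :=
  forall v, st.2 v <= (outdeg v)%:R * rmax.

Definition gbp_init (j : 'I_k) : pstate :=
  (fun _ => 0, fun v => if v \in F j then ((#|F j|)%:R)^-1 else 0).
Definition gbp_push (alpha : R) (st : pstate) (vk : 'I_n) : pstate :=
  let r := st.2 vk in
  (fun i => st.1 i + (if vk \in F i then alpha * (outdeg vk)%:R * r / (#|F i|)%:R else 0),
   fun w => if w == vk then 0
            else st.2 w + (if e w vk then (1 - alpha) * r / (outdeg w)%:R else 0)).
Definition gbp_step (alpha rbmax : R) (st st' : pstate) : Prop :=
  exists vk, rbmax < st.2 vk /\ st' = gbp_push alpha st vk.
Definition gbp_terminal (rbmax : R) (st : pstate) : Prop :=
  forall v, st.2 v <= rbmax.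

Definition tp_rmax (eps delta tau : R) : R := eps * delta / ((nedges)%:R * tau).
Definition avg_deg (i : 'I_k) : R :=
  ((#|F i|)%:R)^-1 * \sum_(s in F i) (outdeg s)%:R.
(* max over V_i in S \ {V_j}; all averages are >= 1 > 0, so 0 is a neutral seed *)
Definition tp_rbmax (eps delta : R) (j : 'I_k) : R :=
  eps * delta / \big[Num.max/0]_(i | i != j) avg_deg i.

End Defs.

(* Main.v *)
Require Import Defs.
From HB Require Import structures.
From mathcomp Require Import all_boot all_order all_algebra.
From mathcomp Require Import all_classical all_reals all_analysis.
From mathcomp Require Import ring lra.
Import Order.TTheory GRing.Theory Num.Theory.
Import numFieldNormedType.Exports.
Local Open Scope classical_set_scope.
Local Open Scope ring_scope.
Set Implicit Arguments. Unset Strict Implicit. Unset Printing Implicit Defensive.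


Lemma lim_rec_eq (R : realType) (I : finType) (S : nat -> R) (L a : R)
  (b : I -> R) (g : I -> nat -> R) (G : I -> R) :
  S x @[x --> \oo] --> L -> (forall i, g i x @[x --> \oo] --> G i) ->
  (forall N, S N.+1 = a + \sum_i b i * g i N) ->
  L = a + \sum_i b i * G i.
Proof.
move=> hS hg hrec.
have h1 : S x.+1 @[x --> \oo] --> L by rewrite cvg_shiftS.
have h2 : (a + \sum_i b i * g i x) @[x --> \oo] --> a + \sum_i b i * G i.
  apply: cvgD; first exact: cvg_cst.
  apply: cvg_big => //; first exact: add_continuous.
  move=> i _; apply: cvgMl_tmp; exact: hg.
have : (fun N => S N.+1) = (fun N => a + \sum_i b i * g i N) by apply: funext => N; exact: hrec.
move=> E; rewrite E in h1.
exact: (cvg_unique _ h1 h2).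
Qed.


Section PPR.
Variables (R : realType) (n : nat) (e : rel 'I_n) (alpha : R).
Hypothesis hnl : forall v : 'I_n, ~~ e v v.
Hypothesis hdeg : forall v : 'I_n, (0 < outdeg e v)%N.
Hypothesis ha0 : 0 < alpha.
Hypothesis ha1 : alpha < 1.

Local Notation P := (trans_mx R e).
Local Notation W := (walk_mx R e).

Lemma walkS t : W t.+1 = W t *m P.
Proof. by rewrite /walk_mx iterS. Qed.

Lemma walkSl t : W t.+1 = P *m W t.
Proof.
elim: t => [|t IH]; first by rewrite walkS /= mul1mx mulmx1.
by rewrite [LHS]walkS [in LHS]IH -mulmxA -walkS.
Qed.

Lemma P_ge0 u v : 0 <= P u v.
Proof. rewrite mxE; case: ifP => // _; by rewrite invr_ge0 ler0n. Qed.

Lemma P_row u : \sum_v P u v = 1.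
Proof.
under eq_bigr do rewrite mxE.
rewrite -big_mkcond /= sumr_const.
have -> : #|[pred v | e u v]| = outdeg e u by rewrite /outdeg cardsE.
rewrite -[X in X = 1]mulr_natr mulVf // pnatr_eq0 -lt0n; exact: hdeg.
Qed.

Lemma W_ge0 t u v : 0 <= W t u v.
Proof.
elim: t u v => [|t IH] u v; first by rewrite /= mxE ler0n.
rewrite walkS mxE; apply: sumr_ge0 => w _; apply: mulr_ge0 => //; exact: P_ge0.
Qed.

Lemma W_row t u : \sum_v W t u v = 1.
Proof.
elim: t u => [|t IH] u.
  rewrite /= (bigD1 u) //= mxE eqxx big1 ?addr0 // => v /negPf; rewrite mxE eq_sym => -> //.
under eq_bigr do rewrite walkS mxE.
rewrite exchange_big /=.
under eq_bigr do rewrite -mulr_sumr P_row mulr1.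
exact: IH.
Qed.

Definition Sp (N : nat) (u v : 'I_n) : R :=
  \sum_(0 <= t < N) (alpha * (1 - alpha) ^+ t * W t u v).

Lemma term_ge0 t u v : 0 <= alpha * (1 - alpha) ^+ t * W t u v.
Proof.
apply: mulr_ge0; last exact: W_ge0.
apply: mulr_ge0; first exact: ltW.
apply: exprn_ge0; rewrite subr_ge0; exact: ltW.
Qed.

Lemma Sp_ge0 N u v : 0 <= Sp N u v.
Proof. apply: sumr_ge0 => t _; exact: term_ge0. Qed.

Lemma geom N : \sum_(0 <= t < N) (alpha * (1 - alpha) ^+ t) = 1 - (1 - alpha) ^+ N.
Proof.
elim: N => [|N IH]; first by rewrite big_geq // expr0 subrr.
rewrite big_nat_recr //= IH exprS; ring.
Qed.

Lemma Sp_le1 N u v : Sp N u v <= 1.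
Proof.
apply: (@le_trans _ _ (\sum_(0 <= t < N) (alpha * (1 - alpha) ^+ t))).
  apply: ler_sum => t _; rewrite -[X in _ <= X]mulr1; apply: ler_wpM2l.
    apply: mulr_ge0; first exact: ltW. apply: exprn_ge0; rewrite subr_ge0; exact: ltW.
  by rewrite -(W_row t u) (bigD1 v) //= lerDl; apply: sumr_ge0 => w _; exact: W_ge0.
rewrite geom lerBlDr lerDl; apply: exprn_ge0; rewrite subr_ge0; exact: ltW.
Qed.

Lemma Sp_homo u v : {homo (fun N => Sp N u v) : a b / (a <= b)%N >-> a <= b}.
Proof.
apply/nondecreasing_seqP => N; rewrite /Sp big_nat_recr //= lerDl; exact: term_ge0.
Qed.

Lemma Sp_cvg u v : Sp x u v @[x --> \oo] --> ppr e alpha u v.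
Proof.
have hub : has_ubound (range (fun N => Sp N u v)).
  by exists 1 => _ [N _ <-]; exact: Sp_le1.
have h := nondecreasing_cvgn (Sp_homo u v) hub.
suff -> : ppr e alpha u v = sup (range (fun N => Sp N u v)) by [].
rewrite /ppr; exact: cvg_lim h.
Qed.

Lemma ppr_ge0 u v : 0 <= ppr e alpha u v.
Proof.
have hub : has_ubound (range (fun N => Sp N u v)).
  by exists 1 => _ [N _ <-]; exact: Sp_le1.
have h := nondecreasing_cvgn_le (Sp_homo u v) (cvgP _ (@Sp_cvg u v)) 0.
by rewrite /Sp big_geq // in h.
Qed.

Lemma ppr_back s v :
  ppr e alpha s v = alpha * W 0 s v + \sum_u ((1 - alpha) * P u v) * ppr e alpha s u.
Proof.
apply: (lim_rec_eq (@Sp_cvg s v) (fun u => @Sp_cvg s u)) => N.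
rewrite /Sp big_nat_recl // expr0 mulr1.
congr (_ + _).
under eq_bigr do rewrite walkS mxE mulr_sumr.
rewrite exchange_big /=; apply: eq_bigr => u _.
rewrite mulr_sumr; apply: eq_bigr => t _; rewrite exprS; ring.
Qed.

Lemma ppr_fwd s v :
  ppr e alpha s v = alpha * W 0 s v + \sum_w ((1 - alpha) * P s w) * ppr e alpha w v.
Proof.
apply: (lim_rec_eq (@Sp_cvg s v) (fun w => @Sp_cvg w v)) => N.
rewrite /Sp big_nat_recl // expr0 mulr1.
congr (_ + _).
under eq_bigr do rewrite walkSl mxE mulr_sumr.
rewrite exchange_big /=; apply: eq_bigr => u _.
rewrite mulr_sumr; apply: eq_bigr => t _; rewrite exprS; ring.
Qed.

Lemma ppr_row s : \sum_v ppr e alpha s v = 1.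
Proof.
set X := \sum_v _.
have hX : X = alpha + (1 - alpha) * X.
  rewrite {1}/X; under eq_bigr do rewrite ppr_back.
  rewrite big_split -mulr_sumr (W_row 0 s) mulr1 exchange_big /=; congr (_ + _).
  rewrite /X mulr_sumr; apply: eq_bigr => u _.
  under eq_bigr do rewrite -mulrA (mulrC (P u _)) mulrA.
  by rewrite -mulr_sumr P_row mulr1.
have h1 : alpha * X = X - (1 - alpha) * X by ring.
rewrite {2}hX addrK in h1.
apply: (mulfI (lt0r_neq0 ha0)); by rewrite h1 mulr1.
Qed.

End PPR.


Section Push.
Variables (R : realType) (n : nat) (e : rel 'I_n) (alpha : R) (k : nat)
  (F : 'I_k -> {set 'I_n}).
Hypothesis hnl : forall v : 'I_n, ~~ e v v.
Hypothesis hdeg : forall v : 'I_n, (0 < outdeg e v)%N.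
Hypothesis ha0 : 0 < alpha.
Hypothesis ha1 : alpha < 1.

Local Notation P := (trans_mx R e).
Local Notation W := (walk_mx R e).
Local Notation pp := (ppr e alpha).

Lemma W0E a b : W 0 a b = (a == b)%:R.
Proof. by rewrite /= mxE. Qed.

Lemma sum_W0l (A : {set 'I_n}) (f : 'I_n -> R) v :
  \sum_(t in A) f t * W 0 t v = if v \in A then f v else 0.
Proof.
case: ifP => hv.
  rewrite (bigD1 v) //= W0E eqxx mulr1 big1 ?addr0 // => t /andP [_ ht].
  by rewrite W0E (negPf ht) mulr0.
rewrite big1 // => t ht; rewrite W0E; case: eqP => [et|]; last by rewrite mulr0.
by rewrite -et ht in hv.
Qed.

Lemma sum_W0r (A : {set 'I_n}) (f : 'I_n -> R) v :
  \sum_(t in A) f t * W 0 v t = if v \in A then f v else 0.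
Proof. rewrite -sum_W0l; apply: eq_bigr => t _; by rewrite !W0E eq_sym. Qed.

Lemma dpos v : 0 < (outdeg e v)%:R :> R.
Proof. by rewrite ltr0n hdeg. Qed.

Lemma resF (st : pstate R n k) vk w :
  (gfp_push e F alpha st vk).2 w =
  st.2 w - (if w == vk then st.2 vk else 0) + (1 - alpha) * P vk w * st.2 vk.
Proof.
rewrite /= mxE; case: eqP => [->|_].
  by rewrite (negPf (hnl vk)) subrr mulr0 mul0r addr0.
rewrite subr0; case: ifP => _; last by rewrite mulr0 mul0r.
rewrite /=; field; apply: lt0r_neq0; exact: dpos.
Qed.

Lemma resB (st : pstate R n k) vk w :
  (gbp_push e F alpha st vk).2 w =
  st.2 w - (if w == vk then st.2 vk else 0) + (1 - alpha) * P w vk * st.2 vk.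
Proof.
rewrite /= mxE; case: eqP => [->|_].
  by rewrite (negPf (hnl vk)) subrr mulr0 mul0r addr0.
rewrite subr0; case: ifP => _; last by rewrite mulr0 mul0r.
rewrite /=; field; apply: lt0r_neq0; exact: dpos.
Qed.

Lemma pushF_t (st : pstate R n k) vk t :
  \sum_v (gfp_push e F alpha st vk).2 v * pp v t =
  \sum_v st.2 v * pp v t - alpha * st.2 vk * W 0 vk t.
Proof.
under eq_bigr do rewrite resF mulrDl mulrBl.
rewrite big_split /= sumrB.
have -> : \sum_v (if v == vk then st.2 vk else 0) * pp v t = st.2 vk * pp vk t.
  rewrite (bigD1 vk) //= eqxx big1 ?addr0 // => v /negPf ->; by rewrite mul0r.
rewrite (ppr_fwd hdeg ha0 ha1 vk t).
have -> : \sum_v (1 - alpha) * P vk v * st.2 vk * pp v t =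
          st.2 vk * \sum_w (1 - alpha) * P vk w * pp w t.
  rewrite mulr_sumr; apply: eq_bigr => v _; ring.
by rewrite mulrDr opprD addrA subrK mulrA (mulrC (st.2 vk)).
Qed.

Lemma pushB_s (st : pstate R n k) vk s :
  \sum_v pp s v * (gbp_push e F alpha st vk).2 v =
  \sum_v pp s v * st.2 v - alpha * st.2 vk * W 0 s vk.
Proof.
under eq_bigr do rewrite resB mulrDr mulrBr.
rewrite big_split /= sumrB.
have -> : \sum_v pp s v * (if v == vk then st.2 vk else 0) = st.2 vk * pp s vk.
  rewrite (bigD1 vk) //= eqxx big1 ?addr0 ?mulr1 1?mulrC // => v /negPf ->; by rewrite mulr0.
rewrite (ppr_back hdeg ha0 ha1 s vk).
have -> : \sum_v pp s v * ((1 - alpha) * P v vk * st.2 vk) =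
          st.2 vk * \sum_u (1 - alpha) * P u vk * pp s u.
  rewrite mulr_sumr; apply: eq_bigr => v _; ring.
by rewrite mulrDr opprD addrA subrK mulrA (mulrC (st.2 vk)).
Qed.

Lemma pushF_nn (st : pstate R n k) vk :
  (forall v, 0 <= st.2 v) -> forall w, 0 <= (gfp_push e F alpha st vk).2 w.
Proof.
move=> h w /=; case: eqP => // _; apply: addr_ge0 => //; case: ifP => // _.
apply: divr_ge0; last exact: ler0n.
apply: mulr_ge0 => //; rewrite subr_ge0; exact: ltW.
Qed.

Lemma pushB_nn (st : pstate R n k) vk :
  (forall v, 0 <= st.2 v) -> forall w, 0 <= (gbp_push e F alpha st vk).2 w.
Proof.
move=> h w /=; case: eqP => // _; apply: addr_ge0 => //; case: ifP => // _.
apply: divr_ge0; last exact: ler0n.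
apply: mulr_ge0 => //; rewrite subr_ge0; exact: ltW.
Qed.

End Push.


Lemma acc_pot (R : realType) (T : Type) (step : T -> T -> Prop) (I : T -> Prop)
  (phi : T -> R) (c : R) :
  0 < c -> (forall x y, I x -> step x y -> I y /\ phi y <= phi x - c) ->
  (forall x, I x -> 0 <= phi x) ->
  forall x, I x -> Acc (fun y x => step x y) x.
Proof.
move=> hc hstep hpos.
suff H : forall N : nat, forall x, I x -> phi x <= N%:R * c -> Acc (fun y x => step x y) x.
  move=> x Ix; apply: (H (Num.Def.archi_bound (phi x / c))) => //.
  have h := archi_boundP (divr_ge0 (hpos x Ix) (ltW hc)).
  rewrite -ler_pdivrMr //; exact: ltW h.
elim=> [|N IH] x Ix hx; constructor => y hy; have [Iy hy'] := hstep x y Ix hy.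
  have h0 := hpos y Iy; rewrite mul0r in hx.
  have : phi y < 0.
    apply: (le_lt_trans hy'); rewrite subr_lt0; exact: (le_lt_trans hx).
  by rewrite ltNge h0.
apply: IH Iy _; apply: (le_trans hy'); rewrite lerBlDr.
by move: hx; rewrite -addn1 natrD mulrDl mul1r.
Qed.

Lemma ed_of (R : realType) (eps delta xh x : R) :
  0 <= eps -> 0 <= delta -> xh <= x -> x - xh <= eps * delta ->
  ed_approx eps delta xh x.
Proof.
move=> he hd h1 h2; have E : `|xh - x| = x - xh.
  by rewrite distrC ger0_norm // subr_ge0.
rewrite /ed_approx E; split => // hx; apply: (le_trans h2); exact: ler_wpM2l.
Qed.

Section Main.
Variables (R : realType) (n : nat) (e : rel 'I_n) (alpha : R) (k : nat)
  (F : 'I_k -> {set 'I_n}).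
Hypothesis hnl : forall v : 'I_n, ~~ e v v.
Hypothesis hdeg : forall v : 'I_n, (0 < outdeg e v)%N.
Hypothesis hF : forall i : 'I_k, F i != finset.set0.
Hypothesis ha0 : 0 < alpha.
Hypothesis ha1 : alpha < 1.

Local Notation P := (trans_mx R e).
Local Notation W := (walk_mx R e).
Local Notation pp := (ppr e alpha).
Local Notation d v := ((outdeg e v)%:R : R).

Lemma cardF_gt0 i : 0 < (#|F i|)%:R :> R.
Proof. by rewrite ltr0n card_gt0. Qed.

Lemma cardF_neq0 i : (#|F i|)%:R != 0 :> R.
Proof. exact: lt0r_neq0 (cardF_gt0 i). Qed.

Definition QF (r : 'I_n -> R) (j : 'I_k) := \sum_(t in F j) \sum_v r v * pp v t.
Definition inv_F (i : 'I_k) (st : pstate R n k) :=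
  (forall v, 0 <= st.2 v) /\
  forall j, ppr_d_sn e F alpha i j = st.1 j + ((#|F j|)%:R)^-1 * QF st.2 j.

Lemma invF_init i : inv_F i (gfp_init R e F i).
Proof.
split=> [v|j] /=.
  case: ifP => // _; apply: divr_ge0; exact: ler0n.
rewrite add0r /QF.
have E t : \sum_v (if v \in F i then d v / (#|F i|)%:R else 0) * pp v t =
           \sum_(v in F i) d v / (#|F i|)%:R * pp v t.
  rewrite [RHS]big_mkcond; apply: eq_bigr => v _; case: ifP => _ //; by rewrite mul0r.
rewrite [in RHS](eq_bigr _ (fun t _ => E t)).
rewrite [in RHS]exchange_big /= /ppr_d_sn !mulr_sumr; apply: eq_bigr => s _.
rewrite !mulr_sumr; apply: eq_bigr => t _.
rewrite /ppr_d natrM invfM; ring.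
Qed.

Lemma invF_push i st vk : inv_F i st -> inv_F i (gfp_push e F alpha st vk).
Proof.
move=> [hnn hx]; split; first exact: pushF_nn.
move=> j; rewrite hx /QF.
under [in RHS]eq_bigr do rewrite (pushF_t F hnl hdeg ha0 ha1).
rewrite sumrB.
have -> : \sum_(t in F j) alpha * st.2 vk * W 0 vk t =
          if vk \in F j then alpha * st.2 vk else 0.
  exact: (sum_W0r e (F j) (fun _ => alpha * st.2 vk)).
rewrite /=; case: ifP => _; last by rewrite subr0 addr0.
ring.
Qed.

Lemma reach_invF i rm st :
  reach (gfp_step e F alpha rm) (gfp_init R e F i) st -> inv_F i st.
Proof.
elim=> [|y z _ IH [vk [_ ->]]]; first exact: invF_init.
exact: invF_push.
Qed.

Lemma QF_bound (r : 'I_n -> R) j rm :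
  (forall v, 0 <= r v) -> (forall v, r v <= d v * rm) ->
  0 <= QF r j <= rm * \sum_(t in F j) \sum_u ppr_d e alpha u t.
Proof.
move=> h0 h1; apply/andP; split.
  apply: sumr_ge0 => t _; apply: sumr_ge0 => v _; apply: mulr_ge0 => //.
  exact: ppr_ge0.
rewrite mulr_sumr; apply: ler_sum => t _; rewrite mulr_sumr; apply: ler_sum => v _.
rewrite /ppr_d mulrA (mulrC rm); apply: ler_wpM2r; last exact: h1.
exact: ppr_ge0.
Qed.

Definition QB (r : 'I_n -> R) (i : 'I_k) :=
  \sum_(s in F i) d s * \sum_v pp s v * r v.
Definition inv_B (j : 'I_k) (st : pstate R n k) :=
  (forall v, 0 <= st.2 v) /\
  forall i, ppr_d_sn e F alpha i j = st.1 i + ((#|F i|)%:R)^-1 * QB st.2 i.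

Lemma invB_init j : inv_B j (gbp_init R F j).
Proof.
split=> [v|i] /=.
  case: ifP => // _; rewrite invr_ge0; exact: ler0n.
rewrite add0r /QB.
have E s : \sum_v pp s v * (if v \in F j then ((#|F j|)%:R)^-1 else 0) =
           \sum_(v in F j) pp s v * ((#|F j|)%:R)^-1.
  rewrite [RHS]big_mkcond; apply: eq_bigr => v _; case: ifP => _ //; by rewrite mulr0.
rewrite [in RHS](eq_bigr (fun s => d s * \sum_(v in F j) pp s v * ((#|F j|)%:R)^-1)); last by move=> s _; rewrite E.
rewrite /ppr_d_sn !mulr_sumr; apply: eq_bigr => s _.
rewrite [in RHS]mulr_sumr [in RHS]mulr_sumr mulr_sumr; apply: eq_bigr => t _.
rewrite /ppr_d natrM invfM; ring.
Qed.

Lemma invB_push j st vk : inv_B j st -> inv_B j (gbp_push e F alpha st vk).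
Proof.
move=> [hnn hx]; split; first exact: pushB_nn.
move=> i; rewrite hx /QB.
under [in RHS]eq_bigr do rewrite (pushB_s F hnl hdeg ha0 ha1) mulrBr.
rewrite sumrB.
have -> : \sum_(s in F i) d s * (alpha * st.2 vk * W 0 s vk) =
          \sum_(s in F i) (alpha * st.2 vk * d s) * W 0 s vk.
  by apply: eq_bigr => s _; ring.
rewrite (sum_W0l e (F i) (fun s => alpha * st.2 vk * d s)).
rewrite /=; case: ifP => _; last by rewrite subr0 addr0.
ring.
Qed.

Lemma reach_invB j rb st :
  reach (gbp_step e F alpha rb) (gbp_init R F j) st -> inv_B j st.
Proof.
elim=> [|y z _ IH [vk [_ ->]]]; first exact: invB_init.
exact: invB_push.
Qed.

Lemma QB_bound (r : 'I_n -> R) i rb :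
  (forall v, 0 <= r v) -> (forall v, r v <= rb) ->
  0 <= QB r i <= rb * \sum_(s in F i) d s.
Proof.
move=> h0 h1; apply/andP; split.
  apply: sumr_ge0 => s _; apply: mulr_ge0; first exact: ler0n.
  apply: sumr_ge0 => v _; apply: mulr_ge0 => //; exact: ppr_ge0.
rewrite mulr_sumr; apply: ler_sum => s _.
rewrite mulrC; apply: ler_wpM2r; first exact: ler0n.
rewrite -[X in _ <= X]mulr1 -(ppr_row hdeg ha0 ha1 s) mulr_sumr.
apply: ler_sum => v _; rewrite mulrC; apply: ler_wpM2r; first exact: ppr_ge0.
exact: h1.
Qed.

End Main.


Section Main2.
Variables (R : realType) (n : nat) (e : rel 'I_n) (alpha : R) (k : nat)
  (F : 'I_k -> {set 'I_n}).
Hypothesis hnl : forall v : 'I_n, ~~ e v v.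
Hypothesis hdeg : forall v : 'I_n, (0 < outdeg e v)%N.
Hypothesis hF : forall i : 'I_k, F i != finset.set0.
Hypothesis ha0 : 0 < alpha.
Hypothesis ha1 : alpha < 1.

Local Notation P := (trans_mx R e).
Local Notation W := (walk_mx R e).
Local Notation pp := (ppr e alpha).
Local Notation d v := ((outdeg e v)%:R : R).

Lemma avg_pos i : 0 < avg_deg R e F i :> R.
Proof.
rewrite /avg_deg; apply: mulr_gt0; first by rewrite invr_gt0 (cardF_gt0 R hF).
have /set0Pn [s hs] := hF i.
rewrite (bigD1 s) //=; apply: (lt_le_trans (dpos R hdeg s)); rewrite lerDl.
apply: sumr_ge0 => v _; exact: ler0n.
Qed.

Lemma avg_le_M i j : i != j ->
  avg_deg R e F i <= \big[Num.max/0]_(i0 | i0 != j) avg_deg R e F i0 :> R.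
Proof. move=> hij; by apply: le_bigmax_cond. Qed.

Lemma rb_pos (i j : 'I_k) (eps delta : R) : i != j -> 0 < eps -> 0 < delta ->
  0 < tp_rbmax e F eps delta j :> R.
Proof.
move=> hij he hd; rewrite /tp_rbmax; apply: divr_gt0; first exact: mulr_gt0.
exact: (lt_le_trans (avg_pos i) (avg_le_M hij)).
Qed.

Lemma termF i rm : 0 < rm ->
  Acc (fun y x => gfp_step e F alpha rm x y) (gfp_init R e F i).
Proof.
move=> hrm.
apply: (@acc_pot R _ _ (fun st : pstate R n k => forall v, 0 <= st.2 v)
   (fun st => \sum_t \sum_v st.2 v * pp v t) (alpha * rm)).
- exact: mulr_gt0.
- move=> x y Ix [vk [hlt ->]]; split; first exact: pushF_nn.
  under eq_bigr do rewrite (pushF_t F hnl hdeg ha0 ha1).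
  rewrite sumrB -mulr_sumr (W_row R hdeg 0 vk) mulr1 lerD2l lerN2.
  apply: ler_wpM2l; first exact: ltW.
  apply: ltW; apply: le_lt_trans hlt.
  rewrite -[X in X <= _]mul1r; apply: ler_wpM2r; first exact: ltW.
  by rewrite ler1n hdeg.
- move=> x Ix; apply: sumr_ge0 => t _; apply: sumr_ge0 => v _.
  apply: mulr_ge0 => //; exact: ppr_ge0.
- move=> v /=; case: ifP => // _; apply: divr_ge0; exact: ler0n.
Qed.

Lemma termB j rb : 0 < rb ->
  Acc (fun y x => gbp_step e F alpha rb x y) (gbp_init R F j).
Proof.
move=> hrb.
apply: (@acc_pot R _ _ (fun st : pstate R n k => forall v, 0 <= st.2 v)
   (fun st => \sum_s \sum_v pp s v * st.2 v) (alpha * rb)).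
- exact: mulr_gt0.
- move=> x y Ix [vk [hlt ->]]; split; first exact: pushB_nn.
  under eq_bigr do rewrite (pushB_s F hnl hdeg ha0 ha1).
  have hW : \sum_s W 0 s vk = 1.
    rewrite -(W_row R hdeg 0 vk); apply: eq_bigr => s _; by rewrite !W0E eq_sym.
  rewrite sumrB -mulr_sumr hW mulr1 lerD2l lerN2.
  apply: ler_wpM2l; first exact: ltW.
  exact: ltW.
- move=> x Ix; apply: sumr_ge0 => t _; apply: sumr_ge0 => v _.
  apply: mulr_ge0 => //; exact: ppr_ge0.
- move=> v /=; case: ifP => // _; rewrite invr_ge0; exact: ler0n.
Qed.

Lemma accF (i j : 'I_k) (st : pstate R n k) (eps delta tau : R) : 0 < eps -> 0 < delta -> 0 < tau ->
  (0 < nedges e)%N -> ~ (tau < tau_pr e F alpha j) -> inv_F e alpha F i st ->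
  gfp_terminal e (tp_rmax e eps delta tau) st ->
  ed_approx eps delta (st.1 j) (ppr_d_sn e F alpha i j).
Proof.
move=> he hd ht hm hnt [hnn hx] hterm.
have /andP [hQ0 hQ1] := QF_bound F hdeg ha0 ha1 j hnn hterm.
rewrite hx; apply: ed_of; [exact: ltW|exact: ltW| |].
  rewrite lerDl; apply: mulr_ge0 => //; rewrite invr_ge0; exact: ler0n.
rewrite addrC addKr.
apply: (le_trans (ler_wpM2l _ hQ1)); first by rewrite invr_ge0; exact: ler0n.
have hm0 : (nedges e)%:R != 0 :> R by rewrite pnatr_eq0 -lt0n.
have hF0 := cardF_neq0 R hF j.
have -> : ((#|F j|)%:R)^-1 * (tp_rmax e eps delta tau *
     \sum_(t in F j) \sum_u ppr_d e alpha u t) =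
     eps * delta * (tau_pr e F alpha j / tau).
  rewrite /tp_rmax /tau_pr natrM invfM; field.
  by rewrite hm0 hF0 /= (lt0r_neq0 ht).
rewrite -[X in _ <= X]mulr1; apply: ler_wpM2l; first by apply: mulr_ge0; exact: ltW.
rewrite ler_pdivrMr // mul1r leNgt; exact/negP.
Qed.

Lemma accB (i j : 'I_k) (st : pstate R n k) (eps delta : R) : i != j -> 0 < eps -> 0 < delta ->
  inv_B e alpha F j st ->
  gbp_terminal (tp_rbmax e F eps delta j) st ->
  ed_approx eps delta (st.1 i) (ppr_d_sn e F alpha i j).
Proof.
move=> hij he hd [hnn hx] hterm.
have /andP [hQ0 hQ1] := QB_bound F hdeg ha0 ha1 i hnn hterm.
rewrite hx; apply: ed_of; [exact: ltW|exact: ltW| |].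
  rewrite lerDl; apply: mulr_ge0 => //; rewrite invr_ge0; exact: ler0n.
rewrite addrC addKr.
apply: (le_trans (ler_wpM2l _ hQ1)); first by rewrite invr_ge0; exact: ler0n.
set M := \big[Num.max/0]_(i0 | i0 != j) avg_deg R e F i0.
have hM : 0 < M := lt_le_trans (avg_pos i) (avg_le_M hij).
have -> : ((#|F i|)%:R)^-1 * (tp_rbmax e F eps delta j * \sum_(s in F i) d s) =
     eps * delta * (avg_deg R e F i / M).
  rewrite /tp_rbmax /avg_deg -/M; field; by rewrite (lt0r_neq0 hM) (cardF_neq0 R hF i).
rewrite -[X in _ <= X]mulr1; apply: ler_wpM2l; first by apply: mulr_ge0; exact: ltW.
rewrite ler_pdivrMr // mul1r; exact: avg_le_M.
Qed.

End Main2.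

Local Close Scope classical_set_scope.
Unset Implicit Arguments.
Theorem theorem3 (R : realType) (n : nat) (e : rel 'I_n) (k : nat)
  (F : 'I_k -> {set 'I_n}) (alpha eps delta tau : R) :
  (forall v : 'I_n, ~~ e v v) ->
  (forall v : 'I_n, (0 < outdeg e v)%N) ->
  (forall i : 'I_k, F i != finset.set0) ->
  (forall i j : 'I_k, i != j -> [disjoint F i & F j]) ->
  (2 <= k)%N ->
  0 < alpha < 1 -> 0 < eps -> 0 < delta -> 0 < tau ->
  (* termination of every GFP run (any choice of pushed nodes) *)
  (forall i : 'I_k,
     Acc (fun y x => gfp_step e F alpha (tp_rmax e eps delta tau) x y) (gfp_init R e F i)) /\
  (* termination of every GBP run, for V_j with tau_j > tau *)
  (forall j : 'I_k, tau < tau_pr e F alpha j ->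
     Acc (fun y x => gbp_step e F alpha (tp_rbmax e F eps delta j) x y) (gbp_init R F j)) /\
  (* accuracy of the final estimates *)
  (forall i j : 'I_k, i != j ->
     (tau < tau_pr e F alpha j ->
        forall st, reach (gbp_step e F alpha (tp_rbmax e F eps delta j)) (gbp_init R F j) st ->
        gbp_terminal (tp_rbmax e F eps delta j) st ->
        ed_approx eps delta (st.1 i) (ppr_d_sn e F alpha i j)) /\
     (~ (tau < tau_pr e F alpha j) ->
        forall st, reach (gfp_step e F alpha (tp_rmax e eps delta tau)) (gfp_init R e F i) st ->
        gfp_terminal e (tp_rmax e eps delta tau) st ->
        ed_approx eps delta (st.1 j) (ppr_d_sn e F alpha i j))).
Proof.
move=> hnl hdeg hF _ hk /andP [ha0 ha1] he hd ht.
have hk0 : (0 < k)%N by apply: leq_trans hk.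
have hk1 : (1 < k)%N by [].
pose o0 : 'I_k := Ordinal hk0.
pose o1 : 'I_k := Ordinal hk1.
have hother : forall j : 'I_k, exists i0 : 'I_k, i0 != j.
  move=> j; case: (eqVneq j o0) => [->|h]; first by exists o1.
  by exists o0; rewrite eq_sym.
have /set0Pn [v0 _] := hF o0.
have hm : (0 < nedges e)%N.
  have /card_gt0P [w hw] := hdeg v0; rewrite inE in hw.
  by apply/card_gt0P; exists (v0, w); rewrite inE.
have hrm : 0 < tp_rmax e eps delta tau.
  rewrite /tp_rmax; apply: divr_gt0; first exact: mulr_gt0.
  by apply: mulr_gt0 => //; rewrite ltr0n.
split; [|split].
- move=> i; exact: termF.
- move=> j _; have [i0 hi0] := hother j; apply: termB => //; exact: rb_pos hi0 he hd.
- move=> i j hij; split.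
  + move=> _ st hr hterm; apply: accB => //; exact: (reach_invB hnl hdeg ha0 ha1 hr).
  + move=> hnt st hr hterm.
    exact: (accF hdeg hF ha0 ha1 he hd ht hm hnt (reach_invF hnl hdeg ha0 ha1 hr) hterm).
Qed.
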